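(* Let $A$ be an invertible doubly nonnegative matrix and let $W=[w_{ij}]$ be its sign change matrix. If a row (respectively, column) of $W$ contains no entry greater than $4$ and at most $M$ entries greater than $2$, then the critical exponent of every entry in the corresponding row (respectively, column) of $A$ is at most $M+1$.
   Context: A real matrix is doubly nonnegative if it is symmetric, positive semidefinite, and entry-wise nonnegative. Write $A=UDU^T$ with $U=[u_{ij}]$ real orthogonal and $D=\mathrm{diag}(\lambda_1,\dots,\lambda_n)$, $\lambda_1\ge\cdots\ge\lambda_n>0$; for real $t\ge 0$, $A^t=UD^tU^T$ (so $A^0=I_n$), and $(A^t)_{ij}=\sum_k u_{ik}u_{jk}\lambda_k^t$. The sign change matrix $W$ has $w_{ij}$ equal to the number of sign changes in the coefficient sequence $(u_{i1}u_{j1},\dots,u_{in}u_{jn})$, arranged in decreasing order of the corresponding eigenvalues (zeros ignored). The critical exponent of the $i,j$-entry of $A$ is the least $m\ge 0$ such that $(A^t)_{ij}\ge 0$ for all $t\ge m$. *)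

(* Defs.v *)
From HB Require Import structures.
From mathcomp Require Import all_boot all_order all_algebra.
From mathcomp Require Import all_classical all_reals all_analysis.
Set Implicit Arguments. Unset Strict Implicit. Unset Printing Implicit Defensive.
Import Order.TTheory GRing.Theory Num.Theory.
Local Open Scope ring_scope.

Definition sign_changes (R : realType) (s : seq R) : nat :=
  let s' := [seq x <- s | x != 0] in
  count (fun p : R * R => p.1 * p.2 < 0) (zip s' (behead s')).

(* Sign change matrix entry w_ij for the eigenvector matrix U whose columns
   are ordered by decreasing eigenvalues: sign changes of (u_ik u_jk)_k. *)
Definition sign_change_entry (R : realType) (n : nat) (U : 'M[R]_n)
  (i j : 'I_n) : nat :=
  sign_changes [seq U i k * U j k | k <- enum 'I_n].

Definition mxpowR (R : realType) (n : nat) (U : 'M[R]_n) (lam : 'I_n -> R)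
  (t : R) : 'M[R]_n :=
  U *m diag_mx (\row_k powR (lam k) t) *m U^T.

Definition doubly_nonnegative (R : realType) (n : nat) (A : 'M[R]_n) : Prop :=
  [/\ A^T = A,
      (forall v : 'cV[R]_n, 0 <= (v^T *m A *m v) 0 0)
    & (forall i j, 0 <= A i j)].

Definition is_critical_exponent (R : realType) (n : nat) (U : 'M[R]_n)
  (lam : 'I_n -> R) (i j : 'I_n) (m : R) : Prop :=
  [/\ 0 <= m,
      (forall t, m <= t -> 0 <= mxpowR U lam t i j)
    & (forall m', 0 <= m' -> (forall t, m' <= t -> 0 <= mxpowR U lam t i j) ->
         m <= m')].

(* Main.v *)
Require Import Defs.
From HB Require Import structures.
From mathcomp Require Import all_boot all_order all_algebra.
From mathcomp Require Import all_classical all_reals all_analysis.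
From mathcomp Require Import ring lra zify.
Import Order.TTheory GRing.Theory Num.Theory.
Import numFieldNormedType.Exports.
Local Open Scope ring_scope.

Section Signs.
Context {R : realType}.
Implicit Types (σ ρ : R) (s t : seq R).

Fixpoint scs (σ : R) (s : seq R) : nat :=
  if s is x :: s' then (if x == 0 then scs σ s' else ((σ * x < 0)%R + scs x s')%N)
  else 0%N.
Fixpoint lastnz (σ : R) (s : seq R) : R :=
  if s is x :: s' then lastnz (if x == 0 then σ else x) s' else σ.

Lemma scs_filter σ s : scs σ [seq x <- s | x != 0] = scs σ s.
Proof.
elim: s σ => //= x s IH σ.
by case: (eqVneq x 0) => [->|nx]; rewrite /= ?eqxx ?nx ?(negPf nx) /= IH.
Qed.

Lemma scs_zip x l : all (fun y => y != 0) l ->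
  scs x l = count (fun p : R * R => p.1 * p.2 < 0) (zip (x :: l) l).
Proof.
elim: l x => //= y l IH x /andP[ny al]; rewrite (negPf ny) IH //.
Qed.

Lemma sign_changesE s : sign_changes s = scs 0 s.
Proof.
rewrite /sign_changes -(scs_filter 0 s).
have : all (fun y => y != 0) [seq x <- s | x != 0] by apply: filter_all.
case: [seq x <- s | x != 0] => [|x l] //= /andP[nx al].
by rewrite (negPf nx) mul0r ltxx add0n scs_zip.
Qed.

Lemma scs_cat σ s1 s2 :
  scs σ (s1 ++ s2) = (scs σ s1 + scs (lastnz σ s1) s2)%N.
Proof.
elim: s1 σ => //= x s1 IH σ; case: eqP => _; rewrite IH ?addnA //.
Qed.

Lemma lastnz_neq0 σ s : σ != 0 -> lastnz σ s != 0.
Proof.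
elim: s σ => //= x s IH σ nσ; apply: IH; by case: ifP => // ->.
Qed.

Lemma scs_opp σ s : scs (- σ) (map -%R s) = scs σ s.
Proof.
elim: s σ => //= x s IH σ; rewrite oppr_eq0; case: eqP => _; rewrite ?IH //.
by rewrite mulrNN.
Qed.

Lemma sgn_key σ ρ (x y : R) : (ρ = 0 -> σ = 0) -> 0 < x * y ->
  ((σ * y < 0)%R <= (ρ * x < 0)%R + (σ * ρ < 0)%R)%N.
Proof.
move=> Hρ Hxy.
case: (ltP (σ * y) 0) => // Hsy.
case: (ltP (ρ * x) 0) => // Hrx.
case: (ltP (σ * ρ) 0) => // Hsr.
exfalso.
have nr : ρ != 0.
  apply/eqP => r0; move: Hsy; rewrite (Hρ r0) mul0r ltxx //.
have r2 : 0 < ρ * ρ by rewrite lt_def mulf_neq0 //= -expr2 sqr_ge0.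
have h1 : 0 <= σ * x by nra.
have nx : x != 0 by apply/eqP => x0; move: Hxy; rewrite x0 mul0r ltxx.
have x2 : 0 < x * x by rewrite lt_def mulf_neq0 //= -expr2 sqr_ge0.
nra.
Qed.

Definition Crel (x y : R) := ((x == 0) ==> (y == 0)) && (0 <= x * y).

Lemma scs_scale s t σ ρ : all2 Crel s t -> (ρ = 0 -> σ = 0) ->
  (scs σ t + (lastnz σ t * lastnz ρ s < 0)%R <= scs ρ s + (σ * ρ < 0)%R)%N.
Proof.
elim: s t σ ρ => [|x s IH] [|y t] σ ρ //=.
move=> /andP[/andP[Hz Hp] Hall] Hρσ.
case: (eqVneq x 0) => [x0|nx].
  move: Hz; rewrite x0 eqxx /= => /eqP y0; rewrite y0 eqxx; exact: IH.
rewrite ?(negPf nx).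
have Hx : x = 0 -> (forall z : R, z = 0) by move=> h; move: nx; rewrite h eqxx.
case: (eqVneq y 0) => [y0|ny].
  rewrite ?y0 ?eqxx.
  have := IH t σ x Hall (fun h => Hx h σ).
  have := @sgn_key σ ρ x x Hρσ.
  have -> : 0 < x * x by rewrite lt_def mulf_neq0 //= -expr2 sqr_ge0.
  move=> /(_ isT); lia.
rewrite ?(negPf ny).
have := IH t y x Hall (fun h => Hx h y).
have -> : (y * x < 0) = false by apply/negbTE; rewrite -leNgt mulrC.
have := @sgn_key σ ρ x y Hρσ.
have -> : 0 < x * y by rewrite lt_def mulf_neq0.
move=> /(_ isT); lia.
Qed.

Lemma scs_split s σ : (0 < scs σ s)%N -> exists s1 s2, s = s1 ++ s2 /\
  lastnz σ s1 != 0 /\ scs (lastnz σ s1) s2 = (scs (- lastnz σ s1) s2).+1.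
Proof.
elim: s σ => //= x s IH σ.
case: (eqVneq x 0) => [x0|nx] H.
  have [s1 [s2 [-> [h1 h2]]]] := IH σ H.
  by exists (x :: s1), s2; rewrite /= x0 eqxx.
case: (ltP (σ * x) 0) => Hsx.
  exists [::], (x :: s); rewrite /= ?(negPf nx) Hsx; split => //; split.
    by apply/eqP => s0; move: Hsx; rewrite s0 mul0r ltxx.
  by rewrite mulNr oppr_lt0 ltNge (ltW Hsx).
move: H; rewrite ?(negPf nx) ltNge Hsx /= add0n => H.
have [s1 [s2 [-> [h1 h2]]]] := IH x H.
by exists (x :: s1), s2; rewrite /= ?(negPf nx).
Qed.

Lemma arith1 (a b x y β γ w : nat) :
  (a + b.+1 = w.+1 -> x + β <= a -> y + γ <= b + β -> x + y <= w)%N.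
Proof. lia. Qed.

Definition rel2 (x y : R * R) := y.2 <= x.2.

Lemma all2_mapP (T : Type) (r : R -> R -> bool) (f g : T -> R) l :
  all2 r (map f l) (map g l) = all (fun a : T => r (f a) (g a)) l.
Proof. by elim: l => //= a l ->. Qed.

Lemma comb_step (p : seq (R * R)) w : sorted rel2 p ->
  scs 0 (map fst p) = w.+1 ->
  exists α : R, (scs 0 [seq (x.1 * (x.2 - α))%R | x <- p] <= w)%N.
Proof.
move=> Hs Hw.
have [s1 [s2 [Hsp [Hnz Hc]]]] : exists s1 s2, map fst p = s1 ++ s2 /\
  lastnz 0 s1 != 0 /\ scs (lastnz 0 s1) s2 = (scs (- lastnz 0 s1) s2).+1.
  by apply: scs_split; rewrite Hw.
set p1 := take (size s1) p; set p2 := drop (size s1) p.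
have Hp : p = p1 ++ p2 by rewrite cat_take_drop.
have E1 : map fst p1 = s1 by rewrite /p1 map_take Hsp take_size_cat.
have E2 : map fst p2 = s2 by rewrite /p2 map_drop Hsp drop_size_cat.
have tr : transitive rel2 by move=> y x z; rewrite /rel2 => h1 h2; exact: le_trans h2 h1.
move: Hs; rewrite (sorted_pairwise tr) Hp pairwise_cat => /and3P[Hall Hpw1 _].
move: Hnz Hc Hw; rewrite -E1 -E2 Hp map_cat.
clear Hp E1 E2; clearbody p1 p2.
case/lastP: p1 Hall Hpw1 => [|p1' e] Hall Hpw1; first by rewrite /= eqxx.
move=> Hnz Hc Hw.
exists e.2.
have F1 : forall x, x \in rcons p1' e -> e.2 <= x.2.
  move=> x; rewrite mem_rcons inE => /orP[/eqP -> //|xp].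
  move: Hpw1; rewrite -cats1 pairwise_cat => /and3P[H _ _].
  by move/allP: H => /(_ x xp) /=; rewrite andbT.
have F2 : forall x, x \in p2 -> x.2 <= e.2.
  move=> x xp; move/allP: Hall => /(_ e); rewrite mem_rcons inE eqxx => /(_ isT).
  by move/allP => /(_ x xp).
set c := lastnz 0 (map fst (rcons p1' e)).
set t1 := [seq x.1 * (x.2 - e.2) | x <- rcons p1' e].
set t2n := [seq x.1 * (e.2 - x.2) | x <- p2].
have -> : [seq x.1 * (x.2 - e.2) | x <- rcons p1' e ++ p2] = t1 ++ map -%R t2n.
  rewrite map_cat -map_comp; congr (_ ++ _); apply: eq_map => x /=.
  by rewrite -mulrN opprB.
rewrite scs_cat.
set L1 := lastnz 0 t1.
have -> : scs L1 (map -%R t2n) = scs (- L1) t2n by rewrite -(scs_opp (- L1)) opprK.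
have A1 := @scs_scale (map fst (rcons p1' e)) t1 0 0.
have A2 := @scs_scale (map fst p2) t2n (- L1) (- c).
move: A1 A2; rewrite -/c -/L1 mulr0 ltxx addn0 mulrNN.
have H1 : all2 Crel (map fst (rcons p1' e)) t1.
  rewrite /t1 all2_mapP; apply/allP => x /F1 hx; rewrite /Crel.
  apply/andP; split; first by apply/implyP => /eqP ->; rewrite mul0r.
  rewrite mulrA; apply: mulr_ge0; [rewrite -expr2; exact: sqr_ge0 | by rewrite subr_ge0].
have H2 : all2 Crel (map fst p2) t2n.
  rewrite /t2n all2_mapP; apply/allP => x /F2 hx; rewrite /Crel.
  apply/andP; split; first by apply/implyP => /eqP ->; rewrite mul0r.
  rewrite mulrA; apply: mulr_ge0; [rewrite -expr2; exact: sqr_ge0 | by rewrite subr_ge0].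
move=> /(_ H1 (fun _ => erefl)) A1.
have Hc0 : (- c = 0) -> - L1 = 0 by move=> /eqP; rewrite oppr_eq0 (negPf Hnz).
move=> /(_ H2 Hc0) A2.
move: Hw A1 A2; rewrite scs_cat Hc /c /L1; exact: arith1.
Qed.

End Signs.

Section Desc.
Context {R : realType}.
Implicit Types (p q : seq (R * R)) (t α : R).

Definition gsum (p : seq (R * R)) (t : R) : R := \sum_(x <- p) x.1 * expR (x.2 * t).
Definition dlist (p : seq (R * R)) := [seq (x.1 * x.2, x.2) | x <- p].
Definition shiftl (α : R) (p : seq (R * R)) := [seq (x.1, x.2 - α) | x <- p].

Lemma term_derive (c a t : R) :
  is_derive t 1 (fun s => c * expR (a * s)) (c * a * expR (a * t)).
Proof.
have h1 : is_derive t (1:R) (fun s : R => a * s) a.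
  have := @is_deriveZ R R R id a t 1 1 (is_derive_id t 1).
  by rewrite /GRing.scale /= mulr1.
have h2 := @is_derive1_comp R expR (fun s : R => a * s) t _ _ (is_derive_expR (a * t)) h1.
have h3 := @is_deriveZ R R R _ c t 1 _ h2.
apply: is_derive_eq h3 _.
by rewrite /GRing.scale /= [expR _ * a]mulrC mulrA.
Qed.

Lemma gsum_cons y q t : gsum (y :: q) t = y.1 * expR (y.2 * t) + gsum q t.
Proof. by rewrite /gsum big_cons. Qed.

Lemma gsum_derive p t : is_derive t 1 (gsum p) (gsum (dlist p) t).
Proof.
elim: p => [|x p IH].
  have -> : gsum [::] = cst 0 by apply/funext => s; rewrite /gsum big_nil.
  exact: is_derive_cst.
have -> : gsum (x :: p) = (fun s => x.1 * expR (x.2 * s)) + gsum p.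
  by apply/funext => s; rewrite gsum_cons.
rewrite /dlist /= gsum_cons /=.
exact: (is_deriveD (term_derive x.1 x.2 t) IH).
Qed.

Lemma gsum_cont p : continuous (gsum p).
Proof.
move=> t; apply: differentiable_continuous; apply/derivable1_diffP.
exact: (@ex_derive _ _ _ _ _ _ _ (gsum_derive p t)).
Qed.

Local Open Scope classical_set_scope.
Local Open Scope ring_scope.
Lemma gsum_within p a b : {within `[a, b], continuous (gsum p)}.
Proof. apply: continuous_subspaceT; exact: gsum_cont. Qed.

Lemma shift_eq p α t : gsum (shiftl α p) t = expR (- α * t) * gsum p t.
Proof.
rewrite /gsum big_map mulr_sumr; apply: eq_bigr => x _ /=.
rewrite mulrCA -expRD; congr (_ * expR _); ring.
Qed.

Lemma reduce p w : sorted (@rel2 R) p -> scs 0 (map fst p) = w.+1 ->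
  exists α, [/\ sorted (@rel2 R) (dlist (shiftl α p)),
    (scs 0 (map fst (dlist (shiftl α p))) <= w)%N &
    forall t, is_derive t 1 (gsum (shiftl α p)) (gsum (dlist (shiftl α p)) t)].
Proof.
move=> Hs Hw; have [α Hα] := @comb_step _ p w Hs Hw.
exists α; split.
- rewrite /dlist /shiftl -map_comp sorted_map; apply: sub_sorted Hs => x y.
  by rewrite /relpre /rel2 /= lerD2r.
- by rewrite /dlist /shiftl -!map_comp.
- by move=> t; exact: gsum_derive.
Qed.

Lemma scs0_sign (σ : R) (s : seq R) : σ != 0 -> scs σ s = 0%N -> forall x, x \in s -> 0 <= σ * x.
Proof.
elim: s σ => //= y s IH σ nσ.
case: (eqVneq y 0) => [y0|ny] H x.
  rewrite inE => /orP[/eqP ->|xs]; first by rewrite y0 mulr0.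
  exact: IH.
move: H => /eqP; rewrite addn_eq0 eqb0 -leNgt => /andP[Hsy /eqP H].
rewrite inE => /orP[/eqP -> //|xs].
have := IH y ny H x xs => Hyx.
have Hsy' : 0 < σ * y by rewrite lt_def mulf_neq0.
have y2 : 0 < y * y by rewrite lt_def mulf_neq0 //= -expr2 sqr_ge0.
nra.
Qed.

Lemma scs0_sign0 (s : seq R) : scs 0 s = 0%N -> exists τ : R, τ != 0 /\ forall x, x \in s -> 0 <= τ * x.
Proof.
elim: s => [|y s IH] /=; first by exists 1; split => //; rewrite oner_eq0.
case: (eqVneq y 0) => [y0|ny] H.
  have [τ [nτ Hτ]] := IH H; exists τ; split => // x.
  rewrite inE => /orP[/eqP ->|]; [by rewrite y0 mulr0 | exact: Hτ].
move: H; rewrite mul0r ltxx add0n => H.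
exists y; split => // x; rewrite inE => /orP[/eqP ->|]; last exact: scs0_sign.
by rewrite -expr2 sqr_ge0.
Qed.

Lemma descartes w : forall p r (z : nat -> R), sorted (@rel2 R) p ->
  (scs 0 (map fst p) <= w)%N -> (w <= r)%N ->
  (forall l, (l < r)%N -> z l < z l.+1) ->
  (forall l, (l <= r)%N -> gsum p (z l) = 0) -> forall t, gsum p t = 0.
Proof.
elim: w => [|w IH] p r z Hs Hw Hr Hz H0 t.
  move: Hw; rewrite leqn0 => /eqP /scs0_sign0 [τ [nτ Hτ]].
  have := H0 0%N (leq0n _); rewrite /gsum => /eqP.
  rewrite -(mulrI_eq0 _ (lregP nτ)) mulr_sumr.
  rewrite big_seq psumr_eq0 => [/allP Hall|x xp]; last first.
    rewrite mulrA; apply: mulr_ge0; last exact: ltW (expR_gt0 _).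
    by apply: Hτ; apply: map_f.
  rewrite big1_seq // => x /andP[_ xp].
  have := Hall x xp; rewrite xp /= => /eqP.
  rewrite mulrA => /eqP; rewrite mulf_eq0 (gt_eqF (expR_gt0 _)) orbF mulf_eq0 (negPf nτ) /=.
  by move/eqP ->; rewrite mul0r.
case: (ltnP (scs 0 (map fst p)) w.+1) => [lt|ge].
  by apply: (IH p r z) => //; apply: ltnW.
have Hw' : scs 0 (map fst p) = w.+1 by apply/eqP; rewrite eqn_leq Hw ge.
have [α [Hsq Hwq Hder]] := @reduce p w Hs Hw'.
set q := dlist (shiftl α p).
set h := gsum (shiftl α p).
have hz : forall l, (l <= r)%N -> h (z l) = 0.
  by move=> l hl; rewrite /h shift_eq H0 // mulr0.
have Ey : forall l, exists y, (l < r)%N -> z l < y < z l.+1 /\ gsum q y = 0.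
  move=> l; case: (ltnP l r) => hl; last by exists 0.
  have [c cab Hc] := @MVT R h (gsum q) (z l) (z l.+1) (Hz l hl)
    (fun x _ => Hder x) (gsum_within _ _ _).
  exists c => _; split; first by move: cab; rewrite in_itv.
  move: Hc; rewrite !hz ?(ltnW hl) // subrr => /esym /eqP.
  rewrite mulf_eq0 subr_eq0 (gt_eqF (Hz l hl)) orbF.
  by move/eqP.
have [y Hy] := choice Ey.
have Hq0 : forall s, gsum q s = 0.
  apply: (IH q r.-1 y) => //.
  - by case: r Hr {hz Ey Hy Hz H0} => //.
  - move=> l hl.
    have hl1 : (l.+1 < r)%N by move: hl; case: r {Hr hz Ey Hy Hz H0} => //.
    have [/andP[h1 h2] _] := Hy l (ltnW hl1).
    have [/andP[h3 h4] _] := Hy l.+1 hl1.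
    exact: lt_trans h2 h3.
  - move=> l hl.
    have hl1 : (l < r)%N by move: hl; case: r Hr {hz Ey Hy Hz H0} => //.
    by have [_ ->] := Hy l hl1.
have hc : forall s, h s = h (z 0%N).
  move=> s; apply: is_derive_0_is_cst => x.
  by have := Hder x; rewrite Hq0.
have := hc t; rewrite hz // /h shift_eq => /eqP.
by rewrite mulf_eq0 (gt_eqF (expR_gt0 _)) /= => /eqP.
Qed.

End Desc.

Section Wlemmas.
Context {R : realType}.
Implicit Types (p q : seq (R * R)) (t α : R).
Local Open Scope classical_set_scope.
Local Open Scope ring_scope.

Lemma desc_list p w (zs : seq R) : sorted (@rel2 R) p ->
  (scs 0 (map fst p) <= w)%N -> (w < size zs)%N -> sorted <%R zs ->
  (forall x, x \in zs -> gsum p x = 0) -> forall t, gsum p t = 0.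
Proof.
move=> Hs Hw Hsz Hz H0.
have [N EN] : exists N, size zs = N.+1 by case: (size zs) Hsz => // N _; exists N.
apply: (@descartes _ w p N (fun l => nth 0 zs l)) => //.
- by rewrite -ltnS -EN.
- move=> l hl; apply: (sorted_ltn_nth lt_trans) => //; rewrite inE EN; lia.
- move=> l hl; apply: H0; apply: mem_nth; rewrite EN; lia.
Qed.

Lemma ivt_zero (f : R -> R) a b : continuous f -> a <= b ->
  (f a <= 0 <= f b) || (f b <= 0 <= f a) -> exists c, a <= c <= b /\ f c = 0.
Proof.
move=> cf ab H.
have H' : Num.min (f a) (f b) <= 0 <= Num.max (f a) (f b).
  by case/orP: H => /andP[h1 h2]; rewrite ge_min le_max ?h1 ?h2 ?orbT.
have [c cab fc] := @IVT R f a b 0 ab (continuous_subspaceT cf) H'.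
by exists c; split => //; move: cab; rewrite in_itv.
Qed.

Lemma mvt_c (h df : R -> R) (a b : R) : a < b -> (forall x : R, is_derive x 1 h (df x)) ->
  continuous h -> exists c, a < c < b /\ h b - h a = df c * (b - a).
Proof.
move=> ab Hd ch.
have [c cab Hc] := @MVT R h df a b ab (fun x _ => Hd x) (continuous_subspaceT ch).
by exists c; split => //; move: cab; rewrite in_itv.
Qed.

Lemma nat_notneg p t : (forall k : nat, 0 <= gsum p k%:R) -> gsum p t < 0 ->
  0 <= t -> exists k : nat, k%:R < t < k.+1%:R.
Proof.
move=> Gn Ht t0; exists (Num.truncn t).
have /andP[h1 h2] := Num.Theory.truncn_itv t0; rewrite h2 andbT lt_def h1 andbT.
apply/eqP => E; move: Ht; rewrite E ltNge Gn.
by [].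
Qed.

Lemma W2 p : sorted (@rel2 R) p -> gsum p 0 = 0 ->
  (forall k : nat, 0 <= gsum p k%:R) -> (scs 0 (map fst p) <= 2)%N ->
  forall t, 1 <= t -> 0 <= gsum p t.
Proof.
move=> Hs G0 Gn Hw t Ht; rewrite leNgt; apply/negP => Hneg.
have t0 : 0 <= t by apply: le_trans Ht.
have [k /andP[hk1 hk2]] := @nat_notneg p t Gn Hneg t0.
have G1 : 0 <= gsum p 1 by have := Gn 1%N.
have [c1 [/andP[c11 c1t] g1]] : exists c, 1 <= c <= t /\ gsum p c = 0.
  by apply: ivt_zero (gsum_cont p) Ht _; rewrite (ltW Hneg) G1 orbT.
have [c2 [/andP[c2t c2k] g2]] : exists c, t <= c <= k.+1%:R /\ gsum p c = 0.
  by apply: ivt_zero (gsum_cont p) (ltW hk2) _; rewrite (ltW Hneg) Gn.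
have c1t' : c1 < t by rewrite lt_def c1t andbT; apply/eqP => E; move: Hneg; rewrite E g1 ltxx.
have c2t' : t < c2 by rewrite lt_def c2t andbT; apply/eqP => E; move: Hneg; rewrite -E g2 ltxx.
have := @desc_list p 2 [:: 0; c1; c2] Hs Hw isT.
rewrite /= (lt_le_trans ltr01 c11) (lt_trans c1t' c2t') => /(_ isT) H.
have Hz : forall x, x \in [:: 0; c1; c2] -> gsum p x = 0.
  by move=> x; rewrite !inE => /or3P[] /eqP ->.
by move: Hneg; rewrite (H Hz t) ltxx.
Qed.

Lemma lt_of_zero (f : R -> R) a b : a <= b -> f a = 0 -> f b != 0 -> a < b.
Proof. move=> ab fa fb; rewrite lt_neqAle ab andbT; apply/eqP => E; by move: fb; rewrite -E fa eqxx. Qed.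

Lemma lt_of_zero' (f : R -> R) a b : a <= b -> f b = 0 -> f a != 0 -> a < b.
Proof. move=> ab fb fa; rewrite lt_neqAle ab andbT; apply/eqP => E; by move: fa; rewrite E fb eqxx. Qed.

Arguments lt_of_zero {f a b}.
Arguments lt_of_zero' {f a b}.
Arguments mvt_c {h df a b}.
Arguments ivt_zero {f a b}.

Lemma W4 p : sorted (@rel2 R) p -> gsum p 0 = 0 ->
  (forall k : nat, 0 <= gsum p k%:R) -> (scs 0 (map fst p) <= 4)%N ->
  forall t1 t2 (m : nat), 1 <= t1 -> t1 < m%:R -> m%:R < t2 ->
  gsum p t1 < 0 -> gsum p t2 < 0 -> False.
Proof.
move=> Hs G0 Gn Hw t1 t2 m H1 H1m Hm2 N1 N2.
have G1 : 0 <= gsum p 1 by have := Gn 1%N.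
have t20 : 0 <= t2 by lra.
have [k /andP[hk1 hk2]] := @nat_notneg p t2 Gn N2 t20.
have [c1 [/andP[c11 c1t] g1]] : exists c, 1 <= c <= t1 /\ gsum p c = 0.
  by apply: ivt_zero (gsum_cont p) H1 _; rewrite (ltW N1) G1 orbT.
have c1t' : c1 < t1 by apply: (lt_of_zero c1t g1); rewrite lt_eqF.
have [c4 [/andP[c4t c4k] g4]] : exists c, t2 <= c <= k.+1%:R /\ gsum p c = 0.
  by apply: ivt_zero (gsum_cont p) (ltW hk2) _; rewrite (ltW N2) Gn.
have c4t' : t2 < c4 by apply: (lt_of_zero' c4t g4); rewrite lt_eqF.
have Gm := Gn m.
case: (eqVneq (gsum p m%:R) 0) => [gm0|gmn].
  case: (ltnP (scs 0 (map fst p)) 4) => [lt3|ge4].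
    have Hz : forall x, x \in [:: 0; c1; m%:R; c4] -> gsum p x = 0.
      by move=> x; rewrite !inE => /or4P[] /eqP ->.
    have o1 : 0 < c1 by lra.
    have o2 : c1 < m%:R by lra.
    have o3 : m%:R < c4 by lra.
    have := @desc_list p 3 [:: 0; c1; m%:R; c4] Hs lt3 isT.
    rewrite /= o1 o2 o3 => /(_ isT Hz t1) E.
    by move: N1; rewrite E ltxx.
  have Hw4 : scs 0 (map fst p) = 3.+1 by apply/eqP; rewrite eqn_leq Hw ge4.
  have [α [Hsq Hwq Hder]] := @reduce R p 3 Hs Hw4.
  set q := dlist (shiftl α p) in Hsq Hwq Hder.
  set h := gsum (shiftl α p) in Hder.
  have hE : forall x, h x = expR (- α * x) * gsum p x by move=> x; exact: shift_eq.
  have hz : forall x, gsum p x = 0 -> h x = 0 by move=> x gx; rewrite hE gx mulr0.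
  have hn : forall x, gsum p x < 0 -> h x < 0 by move=> x gx; rewrite hE pmulr_rlt0 // expR_gt0.
  have ch : continuous h by exact: gsum_cont.
  have [y0 [/andP[y01 y02] E0]] := mvt_c (lt_le_trans ltr01 c11) Hder ch.
  have [s1 [/andP[s11 s12] E1]] := mvt_c c1t' Hder ch.
  have [s2 [/andP[s21 s22] E2]] := mvt_c H1m Hder ch.
  have [s3 [/andP[s31 s32] E3]] := mvt_c Hm2 Hder ch.
  have [s4 [/andP[s41 s42] E4]] := mvt_c c4t' Hder ch.
  move: E0 E1 E2 E3 E4.
  rewrite (hz _ g1) (hz _ G0) (hz _ gm0) (hz _ g4).
  have ht1 := hn _ N1; have ht2 := hn _ N2.
  move=> E0 E1 E2 E3 E4.
  have q0 : gsum q y0 = 0.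
    by move: E0; rewrite subrr subr0 => /esym /eqP; rewrite mulf_eq0 (gt_eqF (lt_le_trans ltr01 c11)) orbF => /eqP.
  have q1 : gsum q s1 < 0 by nra.
  have q2 : 0 < gsum q s2 by nra.
  have q3 : gsum q s3 < 0 by nra.
  have q4 : 0 < gsum q s4 by nra.
  have cq := gsum_cont q.
  have [y1 [/andP[y11 y12] Y1]] : exists c, s1 <= c <= s2 /\ gsum q c = 0.
    by apply: ivt_zero cq _ _; [lra | rewrite (ltW q1) (ltW q2)].
  have [y2 [/andP[y21 y22] Y2]] : exists c, s2 <= c <= s3 /\ gsum q c = 0.
    by apply: ivt_zero cq _ _; [lra | rewrite (ltW q2) (ltW q3) orbT].
  have [y3 [/andP[y31 y32] Y3]] : exists c, s3 <= c <= s4 /\ gsum q c = 0.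
    by apply: ivt_zero cq _ _; [lra | rewrite (ltW q3) (ltW q4)].
  have y1' : s1 < y1 by apply: (lt_of_zero' y11 Y1); rewrite lt_eqF.
  have y2' : s2 < y2 by apply: (lt_of_zero' y21 Y2); rewrite gt_eqF.
  have y3' : s3 < y3 by apply: (lt_of_zero' y31 Y3); rewrite lt_eqF.
  have y1'' : y1 < s2 by apply: (lt_of_zero y12 Y1); rewrite gt_eqF.
  have y2'' : y2 < s3 by apply: (lt_of_zero y22 Y2); rewrite lt_eqF.
  have o1 : y0 < y1 by lra.
  have o2 : y1 < y2 by lra.
  have o3 : y2 < y3 by lra.
  have Hz : forall x, x \in [:: y0; y1; y2; y3] -> gsum q x = 0.
    by move=> x; rewrite !inE => /or4P[] /eqP ->.
  have := @desc_list q 3 [:: y0; y1; y2; y3] Hsq Hwq isT.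
  rewrite /= o1 o2 o3 => /(_ isT Hz) Q0.
  have hc : h t1 = h 0.
    apply: is_derive_0_is_cst => x; by have := Hder x; rewrite Q0.
  by move: ht1; rewrite hc (hz _ G0) ltxx.
have gmp : 0 < gsum p m%:R by rewrite lt_def gmn Gm.
have [c2 [/andP[c21 c22] g2]] : exists c, t1 <= c <= m%:R /\ gsum p c = 0.
  by apply: ivt_zero (gsum_cont p) (ltW H1m) _; rewrite (ltW N1) (ltW gmp).
have [c3 [/andP[c31 c32] g3]] : exists c, m%:R <= c <= t2 /\ gsum p c = 0.
  by apply: ivt_zero (gsum_cont p) (ltW Hm2) _; rewrite (ltW N2) (ltW gmp) orbT.
have c2' : t1 < c2 by apply: (lt_of_zero' c21 g2); rewrite lt_eqF.
have c3' : c3 < t2 by apply: (lt_of_zero c32 g3); rewrite lt_eqF.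
have c2'' : c2 < m%:R by apply: (lt_of_zero c22 g2); rewrite gt_eqF.
have c3'' : m%:R < c3 by apply: (lt_of_zero' c31 g3); rewrite gt_eqF.
have Hz : forall x, x \in [:: 0; c1; c2; c3; c4] -> gsum p x = 0.
  by move=> x; rewrite !inE => /orP[/eqP ->|/or4P[] /eqP ->].
have o1 : 0 < c1 by lra.
have o2 : c1 < c2 by lra.
have o3 : c2 < c3 by lra.
have o4 : c3 < c4 by lra.
have := @desc_list p 4 [:: 0; c1; c2; c3; c4] Hs Hw isT.
rewrite /= o1 o2 o3 o4 => /(_ isT Hz t1) E.
by move: N1; rewrite E ltxx.
Qed.

End Wlemmas.

Section Crit.
Context {R : realType}.
Local Open Scope classical_set_scope.
Local Open Scope ring_scope.

Lemma crit_exists (f : R -> R) (m0 : R) : continuous f -> 0 <= m0 ->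
  (forall t, m0 <= t -> 0 <= f t) ->
  exists m, [/\ 0 <= m, (forall t, m <= t -> 0 <= f t) &
    (forall m', 0 <= m' -> (forall t, m' <= t -> 0 <= f t) -> m <= m')] /\ m <= m0.
Proof.
move=> cf m00 Hm0.
pose S := [set m : R | 0 <= m /\ forall t, m <= t -> 0 <= f t].
have Sm0 : S m0 by split.
have ne : S !=set0 by exists m0.
have hlb : has_lbound S by exists 0 => y [].
exists (inf S); split; last exact: ge_inf.
split.
- by apply: lb_le_inf => // y [].
- have gt : forall t, inf S < t -> 0 <= f t.
    by move=> t /(inf_lt ne) [y [_ Hy] yt]; apply: Hy; exact: ltW.
  move=> t; rewrite le_eqVlt => /orP[/eqP <-|]; last exact: gt.
  have HH := (@closed_cvg R R (at_right (inf S)) _ f (fun x => 0 <= x) (@closed_ge R 0)).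
  apply: (HH _ _ (f (inf S))).
    near=> s; apply: gt; near: s; exact: nbhs_right_gt.
  apply: cvg_at_right_filter; exact: cf.
- by move=> m' h0 hm'; apply: ge_inf.
Unshelve. all: by end_near. Qed.

End Crit.

Section Mx.
Context {R : realType} {n : nat} (A U : 'M[R]_n) (lam : 'I_n -> R).
Context (HUU : U *m U^T = 1%:M) (Hpos : forall k : 'I_n, 0 < lam k)
  (Hmono : forall k l : 'I_n, (k <= l)%N -> lam l <= lam k)
  (HA : A = U *m diag_mx (\row_k lam k) *m U^T) (Anneg : forall i j, 0 <= A i j).
Local Open Scope ring_scope.

Definition pij (i j : 'I_n) : seq (R * R) :=
  [seq (U i k * U j k, ln (lam k)) | k <- enum 'I_n].

Lemma mxpowR_entry t i j :
  mxpowR U lam t i j = \sum_k U i k * powR (lam k) t * U j k.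
Proof.
rewrite /mxpowR mul_mx_diag !mxE; apply: eq_bigr => k _; rewrite !mxE //.
Qed.

Lemma f_gsum t i j : mxpowR U lam t i j = gsum (pij i j) t.
Proof.
rewrite mxpowR_entry /gsum /pij big_map big_enum /=; apply: eq_bigr => k _ /=.
rewrite /powR (gt_eqF (Hpos k)) mulrAC; congr (_ * expR _); exact: mulrC.
Qed.

Lemma pij_sorted i j : sorted (@rel2 R) (pij i j).
Proof.
rewrite /pij sorted_map.
have Hs : sorted (relpre val ltn) (enum 'I_n).
  by rewrite -sorted_map val_enum_ord iota_ltn_sorted.
apply: sub_sorted Hs => k l; rewrite /relpre /rel2 /= => kl.
rewrite ler_ln ?posrE ?Hpos //; apply: Hmono; exact: ltnW.
Qed.

Lemma sce i j : sign_change_entry U i j = scs 0 (map fst (pij i j)).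
Proof. rewrite /sign_change_entry sign_changesE /pij; congr (scs 0 _); by elim: (enum _) => //= k s ->. Qed.

Lemma HUtU : U^T *m U = 1%:M.
Proof. exact: mulmx1C. Qed.

Lemma mxpowR_add1 t : mxpowR U lam (t + 1) = mxpowR U lam t *m A.
Proof.
rewrite HA /mxpowR !mulmxA -(mulmxA (U *m _) U^T U) HUtU mulmx1.
rewrite -!(mulmxA U); congr (U *m (_ *m U^T)).
rewrite mul_diag_mx; apply/matrixP => a b; rewrite !mxE.
case: (eqVneq a b) => [->|ne] /=; rewrite ?mulr1n ?mulr0n ?mulr0 //.
rewrite powRD; last by rewrite (gt_eqF (Hpos b)) implybT.
by rewrite powRr1 // ltW.
Qed.

Lemma f_zero i j : mxpowR U lam 0 i j = (1%:M : 'M[R]_n) i j.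
Proof.
rewrite mxpowR_entry -HUU !mxE; apply: eq_bigr => k _.
by rewrite powRr0 mulr1 mxE.
Qed.

Lemma nat_nonneg (k : nat) i j : 0 <= mxpowR U lam k%:R i j.
Proof.
elim: k i j => [|k IH] i j.
  by rewrite f_zero mxE ler0n.
rewrite -addn1 natrD mxpowR_add1 mxE; apply: sumr_ge0 => l _.
by apply: mulr_ge0.
Qed.

Lemma f_sym t i j : mxpowR U lam t i j = mxpowR U lam t j i.
Proof. by rewrite !mxpowR_entry; apply: eq_bigr => k _; ring. Qed.

Lemma sce_sym i j : sign_change_entry U i j = sign_change_entry U j i.
Proof. by rewrite /sign_change_entry; congr sign_changes; apply: eq_map => k; rewrite mulrC. Qed.

Lemma f_diag t i : 0 <= mxpowR U lam t i i.
Proof.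
rewrite mxpowR_entry; apply: sumr_ge0 => k _.
rewrite mulrAC; apply: mulr_ge0; [rewrite -expr2; exact: sqr_ge0 | exact: powR_ge0].
Qed.

Lemma scs_nonneg (σ : R) (s : seq R) : 0 <= σ -> (forall x, x \in s -> 0 <= x) -> scs σ s = 0%N.
Proof.
elim: s σ => //= x s IH σ hσ hs.
have hx : 0 <= x by apply: hs; rewrite inE eqxx.
have hs' : forall y, y \in s -> 0 <= y by move=> y ys; apply: hs; rewrite inE ys orbT.
case: eqP => _; first exact: IH.
by rewrite ltNge mulr_ge0 //= IH.
Qed.

Lemma sce_diag i : sign_change_entry U i i = 0%N.
Proof.
rewrite sce; apply: scs_nonneg => // x /mapP [y /mapP [k _ ->] ->] /=.
by rewrite -expr2 sqr_ge0.
Qed.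

Lemma prop_row i (m0 : R) :
  (forall j s, m0 <= s <= m0 + 1 -> 0 <= mxpowR U lam s i j) ->
  forall j t, m0 <= t -> 0 <= mxpowR U lam t i j.
Proof.
move=> H0.
have H : forall N : nat, forall j s, m0 + N%:R <= s <= m0 + N%:R + 1 ->
    0 <= mxpowR U lam s i j.
  elim => [|N IH] j s; first by rewrite addr0; exact: H0.
  move=> /andP[h1 h2].
  rewrite -(subrK 1 s) mxpowR_add1 mxE; apply: sumr_ge0 => l _.
  apply: mulr_ge0 => //; apply: IH; move: h1 h2; rewrite -addn1 natrD.
  by move=> h1 h2; apply/andP; split; lra.
move=> j t ht.
have t0 : 0 <= t - m0 by lra.
have /andP[h1 h2] := Num.Theory.truncn_itv t0.
by apply: (H (Num.truncn (t - m0))); apply/andP; split; lra.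
Qed.

Lemma row_result (M : nat) i :
  (forall j : 'I_n, (sign_change_entry U i j <= 4)%N) ->
  (#|[set j : 'I_n | (2 < sign_change_entry U i j)%N]| <= M)%N ->
  forall j : 'I_n, exists m : R,
    is_critical_exponent U lam i j m /\ m <= (M + 1)%:R.
Proof.
move=> H4 HM j0.
set B := [set j : 'I_n | (2 < sign_change_entry U i j)%N].
pose bad (m : nat) (j : 'I_n) :=
  exists t, m%:R <= t <= m%:R + 1 /\ mxpowR U lam t i j < 0.
have G0 : forall j, j != i -> gsum (pij i j) 0 = 0.
  by move=> j ji; rewrite -f_gsum f_zero mxE eq_sym (negPf ji).
have Gn : forall j (k : nat), 0 <= gsum (pij i j) k%:R.
  by move=> j k; rewrite -f_gsum; exact: nat_nonneg.
have notB : forall j (m : nat), j \notin B -> (1 <= m)%N -> ~ bad m j.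
  move=> j m jB m1 [t [/andP[t1 t2] ft]].
  case: (eqVneq j i) => [ji|ji].
    by move: ft; rewrite ji ltNge f_diag.
  have Hw2 : (scs 0 (map fst (pij i j)) <= 2)%N.
    by rewrite -sce; move: jB; rewrite inE -leqNgt.
  have t1' : 1 <= t by apply: le_trans t1; rewrite ler1n.
  have := @W2 R (pij i j) (pij_sorted i j) (G0 j ji) (Gn j) Hw2 t t1'.
  by rewrite -f_gsum leNgt ft.
have uniq_bad : forall j (m m' : nat), (1 <= m)%N -> (1 <= m')%N -> bad m j -> bad m' j -> m = m'.
  move=> j m m' m1 m1' bm bm'.
  have jB : j \in B by apply/negPn/negP => jB; exact: notB j m jB m1 bm.
  have ji : j != i by apply/eqP => ji; move: jB; rewrite inE ji sce_diag.
  have Hw4 : (scs 0 (map fst (pij i j)) <= 4)%N by rewrite -sce.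
  have W := @W4 R (pij i j) (pij_sorted i j) (G0 j ji) (Gn j) Hw4.
  have key : forall a b : nat, (1 <= a)%N -> (a < b)%N -> bad a j -> bad b j -> False.
    move=> a b a1 ab [t [/andP[t1 t2] ft]] [t' [/andP[t1' t2'] ft']].
    have ht : t < a.+1%:R.
      rewrite lt_neqAle -addn1 natrD t2 andbT; apply/eqP => E.
      by move: ft; rewrite E -natrD addn1 ltNge nat_nonneg.
    have ht' : b%:R < t'.
      rewrite lt_neqAle t1' andbT; apply/eqP => E.
      by move: ft'; rewrite -E ltNge nat_nonneg.
    apply: (W t t' a.+1).
    - by apply: le_trans t1; rewrite ler1n.
    - exact: ht.
    - by apply: le_lt_trans ht'; rewrite ler_nat.
    - by rewrite -f_gsum.
    - by rewrite -f_gsum.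
  case: (ltngtP m m') => // h; exfalso.
    exact: key m m' m1 h bm bm'.
  exact: key m' m m1' h bm' bm.
have [m0 Hm0] : exists m0 : 'I_(M.+1), forall j, ~ bad m0.+1 j.
  apply: contrapT => nH.
  have Hall : forall m0 : 'I_(M.+1), exists j, bad m0.+1 j.
    move=> m0; apply: contrapT => hn; apply: nH; exists m0 => j hj; apply: hn; by exists j.
  have [g Hg] := choice Hall.
  have ginj : injective g.
    move=> a b gab; apply: val_inj; apply: succn_inj.
    apply: (uniq_bad (g a)) => //; [exact: Hg | rewrite gab; exact: Hg].
  have sub : g @: [set: 'I_(M.+1)] \subset B.
    apply/fintype.subsetP => _ /imsetP [x _ ->]; apply/negPn/negP => hB.
    exact: (notB (g x) x.+1 hB (ltn0Sn _) (Hg x)).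
  have := subset_leq_card sub; rewrite card_imset // cardsT card_ord => h.
  move: (leq_trans h HM); rewrite ltnn //.
set w0 := (m0.+1)%:R : R.
have Hwin : forall j s, w0 <= s <= w0 + 1 -> 0 <= mxpowR U lam s i j.
  move=> j s hs; rewrite leNgt; apply/negP => hneg; apply: (Hm0 j); exists s; split => //.
have Hall : forall j t, w0 <= t -> 0 <= mxpowR U lam t i j.
  move=> j t; apply: prop_row => //.
have cf : continuous (fun t => mxpowR U lam t i j0).
  have -> : (fun t => mxpowR U lam t i j0) = gsum (pij i j0).
    by apply/funext => t; exact: f_gsum.
  exact: gsum_cont.
have [m [Hc hm]] := @crit_exists R _ w0 cf (ler0n _ _) (Hall j0).
exists m; split; first exact: Hc.
apply: le_trans hm _; rewrite /w0 ler_nat addn1; exact: ltn_ord.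
Qed.

End Mx.

Theorem lemma4p3 (R : realType) (n : nat) (A U : 'M[R]_n) (lam : 'I_n -> R)
  (M : nat) :
  doubly_nonnegative A ->
  A \in unitmx ->
  U *m U^T = 1%:M ->
  (forall k : 'I_n, 0 < lam k) ->
  (forall k l : 'I_n, (k <= l)%N -> lam l <= lam k) ->
  A = U *m diag_mx (\row_k lam k) *m U^T ->
  (* row version *)
  (forall i : 'I_n,
     (forall j : 'I_n, (sign_change_entry U i j <= 4)%N) ->
     (#|[set j : 'I_n | (2 < sign_change_entry U i j)%N]| <= M)%N ->
     forall j : 'I_n, exists m : R,
       is_critical_exponent U lam i j m /\ m <= (M + 1)%:R) /\
  (* column version *)
  (forall j : 'I_n,
     (forall i : 'I_n, (sign_change_entry U i j <= 4)%N) ->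
     (#|[set i : 'I_n | (2 < sign_change_entry U i j)%N]| <= M)%N ->
     forall i : 'I_n, exists m : R,
       is_critical_exponent U lam i j m /\ m <= (M + 1)%:R).
Proof.
move=> [_ _ Anneg] _ HUU Hpos Hmono HA; split.
  move=> i H4 HM j; exact: (@row_result R n A U lam HUU Hpos Hmono HA Anneg M i H4 HM j).
move=> j H4 HM i.
have H4' : forall i', (sign_change_entry U j i' <= 4)%N.
  by move=> i'; rewrite sce_sym.
have HM' : (#|[set i' : 'I_n | (2 < sign_change_entry U j i')%N]| <= M)%N.
  suff -> : [set i' : 'I_n | (2 < sign_change_entry U j i')%N] =
            [set i' : 'I_n | (2 < sign_change_entry U i' j)%N] by [].
  by apply/setP => x; rewrite !inE sce_sym.
have [m [[h1 h2 h3] hm]] := @row_result R n A U lam HUU Hpos Hmono HA Anneg M j H4' HM' i.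
exists m; split => //; split => // [t ht|m' h0 hm'].
  by rewrite f_sym; exact: h2.
by apply: h3 => // t ht; rewrite f_sym; exact: hm'.
Qed.
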